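(* Let $P\in\mathbb{O}P^2$ and let $V_P=(A_0(P)\oplus A_1(P))\cap(\mathbb{R}I)^{\perp}\subset\mathfrak{h}^0_3(\mathbb{O})$ be the corresponding subspace, where $A_j(P)$ is the $j$-eigenspace of $X\mapsto P\circ X$ on $\mathfrak{h}_3(\mathbb{O})$. For $Z\in T_P\mathbb{O}P^2$ let $\hat Z\in\mathrm{Hom}(V_P,V_P^\perp)\oplus\mathrm{Hom}(V_P^\perp,V_P)$ be the derivative at $P$ in the direction $Z$ of the map $Q\mapsto \pi_{V_Q}$ (orthogonal projection of $\mathfrak{h}^0_3(\mathbb{O})$ onto $V_Q$). Then for every $Z\in T_P\mathbb{O}P^2$ and $X\in\mathfrak{h}^0_3(\mathbb{O})$, $$\hat Z(X)=-4\,Z\circ X+4\,Z\circ(P\circ X)+4\,P\circ(Z\circ X).$$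
   Context: $\mathfrak{h}_3(\mathbb{O})$ is the real vector space of hermitian $3\times3$ octonionic matrices with Jordan product $a\circ b=\frac12(ab+ba)$ and inner product $\langle a,b\rangle=\frac12\operatorname{tr}(a\circ b)$; $\mathfrak{h}^0_3(\mathbb{O})$ is the subspace of traceless matrices; $I$ is the identity matrix. $\mathbb{O}P^2=\{P\in\mathfrak{h}_3(\mathbb{O}):P\circ P=P,\ \operatorname{tr}P=1\}$. For $P\in\mathbb{O}P^2$, $\mathfrak{h}_3(\mathbb{O})=A_0(P)\oplus A_{1/2}(P)\oplus A_1(P)$ is the eigenspace decomposition of $X\mapsto P\circ X$, and $T_P\mathbb{O}P^2=\{Z:2P\circ Z=Z\}=A_{1/2}(P)$. The map $P\mapsto V_P$ identifies $\mathbb{O}P^2$ with the Grassmannian of $10$-dimensional subspaces $V\subset\mathfrak{h}^0_3(\mathbb{O})$ closed under the traceless Jordan product. *)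

(* Defs.v *)
From HB Require Import structures.
From mathcomp Require Import all_boot all_order all_algebra.
From mathcomp Require Import all_classical all_reals all_analysis.
From Stdlib Require Import ClassicalEpsilon.
Set Implicit Arguments. Unset Strict Implicit. Unset Printing Implicit Defensive.
Import Order.TTheory GRing.Theory Num.Theory.
Import numFieldNormedType.Exports.
Local Open Scope ring_scope.

Section Octonions.
Variable R : realType.

(* Cayley--Dickson doubling (Wikipedia convention):
   (a,b)(c,d) = (a c - conj(d) b, d a + b conj(c)),  conj(a,b) = (conj a, -b). *)
Definition cd_mul (A : zmodType) (mul : A -> A -> A) (cj : A -> A)
  (x y : A * A) : A * A :=
  (mul x.1 y.1 - mul (cj y.2) x.2, mul y.2 x.1 + mul x.2 (cj y.1)).
Definition cd_conj (A : zmodType) (cj : A -> A) (x : A * A) : A * A :=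
  (cj x.1, - x.2).

Definition cpx := (R * R)%type.
Definition quat := (cpx * cpx)%type.
Definition oct := (quat * quat)%type.

Definition conjC' : cpx -> cpx := cd_conj (fun r : R => r).
Definition mulC' : cpx -> cpx -> cpx := cd_mul ( *%R : R -> R -> R) (fun r : R => r).
Definition conjH : quat -> quat := cd_conj conjC'.
Definition mulH : quat -> quat -> quat := cd_mul mulC' conjC'.
Definition conjO : oct -> oct := cd_conj conjH.
Definition mulO : oct -> oct -> oct := cd_mul mulH conjH.

Definition oneO : oct := (((1 : R), (0 : R)), (0 : cpx), (0 : quat)).
Definition reO (x : oct) : R := x.1.1.1.

Definition omat := 'M[oct]_3.

Definition omul (A B : omat) : omat :=
  \matrix_(i, j) \sum_(k < 3) mulO (A i k) (B k j).

Definition oscale (r : R) (A : omat) : omat := map_mx (fun x : oct => r *: x) A.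

Definition jordan (A B : omat) : omat := oscale 2^-1 (omul A B + omul B A).

Definition hermitian (A : omat) : Prop := forall i j, A j i = conjO (A i j).

Definition Id3 : omat := \matrix_(i, j) (if i == j then oneO else 0).

Definition otr (A : omat) : R := \sum_(i < 3) reO (A i i).

Definition oinner (A B : omat) : R := 2^-1 * otr (jordan A B).

Definition h30 (X : omat) : Prop := hermitian X /\ otr X = 0.

Definition OP2 (P : omat) : Prop := hermitian P /\ jordan P P = P /\ otr P = 1.

Definition eigsp (P : omat) (l : R) (X : omat) : Prop :=
  hermitian X /\ jordan P X = oscale l X.

(* T_P OP^2 = {Z in h_3(O) : 2 P o Z = Z} = A_{1/2}(P) *)
Definition tangentOP2 (P Z : omat) : Prop :=
  hermitian Z /\ oscale 2%:R (jordan P Z) = Z.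

Definition VP (P : omat) (X : omat) : Prop :=
  (exists X0 X1, eigsp P 0 X0 /\ eigsp P 1 X1 /\ X = X0 + X1)
  /\ oinner X Id3 = 0.

Definition oproj (V : omat -> Prop) (X : omat) : omat :=
  epsilon (inhabits (0 : omat))
    (fun Y => V Y /\ forall W, V W -> oinner (X - Y) W = 0).

(* derivative at t = 0 of a curve of octonionic matrices (entrywise;
   oct is a finite product of copies of R, hence a normed R-module) *)
Definition curve_deriv0 (g : R -> omat) (D : omat) : Prop :=
  forall i j, is_derive (0 : R) (1 : R) (fun t => g t i j) (D i j).

End Octonions.

(* Main.v *)
Require Import Defs.
From HB Require Import structures.
From mathcomp Require Import all_boot all_order all_algebra.
From mathcomp Require Import all_classical all_reals all_analysis.
From mathcomp Require Import ring lra.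
From Stdlib Require Import ClassicalEpsilon.
Set Implicit Arguments. Unset Strict Implicit. Unset Printing Implicit Defensive.
Import Order.TTheory GRing.Theory Num.Theory.
Import numFieldNormedType.Exports.
Local Open Scope ring_scope.
Notation cd_mul := Defs.cd_mul (only parsing).
Notation cd_conj := Defs.cd_conj (only parsing).
Notation cpx := Defs.cpx (only parsing).
Notation quat := Defs.quat (only parsing).
Notation oct := Defs.oct (only parsing).
Notation conjC' := Defs.conjC' (only parsing).
Notation mulC' := Defs.mulC' (only parsing).
Notation conjH := Defs.conjH (only parsing).
Notation mulH := Defs.mulH (only parsing).
Notation conjO := Defs.conjO (only parsing).
Notation oneO := Defs.oneO (only parsing).
Notation reO := Defs.reO (only parsing).
Notation omat := Defs.omat (only parsing).
Notation omul := Defs.omul (only parsing).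
Notation oscale := Defs.oscale (only parsing).
Notation jordan := Defs.jordan (only parsing).
Notation hermitian := Defs.hermitian (only parsing).
Notation Id3 := Defs.Id3 (only parsing).
Notation otr := Defs.otr (only parsing).
Notation oinner := Defs.oinner (only parsing).
Notation h30 := Defs.h30 (only parsing).
Notation OP2 := Defs.OP2 (only parsing).
Notation eigsp := Defs.eigsp (only parsing).
Notation tangentOP2 := Defs.tangentOP2 (only parsing).
Notation VP := Defs.VP (only parsing).
Notation oproj := Defs.oproj (only parsing).
Notation curve_deriv0 := Defs.curve_deriv0 (only parsing).
Notation mulO := Defs.mulO (only parsing).

Definition mono := seq nat.
Definition term := (mono * int)%type.
Definition rpoly := seq term.

Fixpoint mlt (m1 m2 : mono) : bool :=
  match m1, m2 with
  | [::], [::] => false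
  | [::], _ => true
  | _ :: _, [::] => false
  | a :: r1, b :: r2 => if (a < b)%N then true else if (b < a)%N then false else mlt r1 r2
  end.

Fixpoint padd (p q : rpoly) {struct p} : rpoly :=
  match p with
  | [::] => q
  | t :: p' =>
    (fix padd_aux (q : rpoly) : rpoly :=
       match q with
       | [::] => p
       | u :: q' =>
         if t.1 == u.1 then
           (let c := t.2 + u.2 in if c == 0 then padd p' q' else (t.1, c) :: padd p' q')
         else if mlt t.1 u.1 then t :: padd p' q
         else u :: padd_aux q'
       end) q
  end.

Definition popp (p : rpoly) : rpoly := [seq (t.1, - t.2) | t <- p].
Definition pmterm (t : term) (q : rpoly) : rpoly := [seq (merge leq t.1 u.1, t.2 * u.2) | u <- q].
Definition pmul0 (p q : rpoly) : rpoly := foldr (fun t acc => padd (pmterm t q) acc) [::] p.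
Definition pmul (p q : rpoly) : rpoly := if (size q < size p)%N then pmul0 q p else pmul0 p q.
Definition pvar (i : nat) : rpoly := [:: ([:: i], 1)].

Section Eval.
Variable S : comPzRingType.
Variable env : nat -> S.

Definition evm (m : mono) : S := \prod_(v <- m) env v.
Definition evt (t : term) : S := t.2%:~R * evm t.1.
Definition evp (p : rpoly) : S := \sum_(t <- p) evt t.

Lemma evp_cons t p : evp (t :: p) = evt t + evp p.
Proof. by rewrite /evp big_cons. Qed.

Lemma evp_nil : evp [::] = 0.
Proof. by rewrite /evp big_nil. Qed.

Lemma padd_cons t p u q : padd (t :: p) (u :: q) =
  if t.1 == u.1 then
    (if t.2 + u.2 == 0 then padd p q else (t.1, t.2 + u.2) :: padd p q)
  else if mlt t.1 u.1 then t :: padd p (u :: q)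
  else u :: padd (t :: p) q.
Proof. by []. Qed.

Lemma padd_nil t p : padd (t :: p) [::] = t :: p.
Proof. by []. Qed.

Lemma evp_add p q : evp (padd p q) = evp p + evp q.
Proof.
elim: p q => [|t p IH] q; first by rewrite evp_nil add0r.
elim: q => [|u q IHq]; first by rewrite padd_nil evp_nil addr0.
rewrite padd_cons.
case: (t.1 =P u.1) => [e|ne].
  have E : evt t + evt u = evt (t.1, t.2 + u.2) by rewrite /evt /= e intrD mulrDl.
  case: (t.2 + u.2 =P 0) => [c0|_].
    rewrite IH !evp_cons addrACA E /evt /= c0 mul0r add0r //.
  by rewrite !evp_cons IH addrACA E.
case: ifP => _.
  by rewrite !evp_cons IH !evp_cons addrA.
by rewrite !evp_cons IHq !evp_cons addrCA.
Qed.

Lemma evp_opp p : evp (popp p) = - evp p.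
Proof.
rewrite /evp /popp big_map -sumrN; apply: eq_bigr => t _.
by rewrite /evt /= intrN mulNr.
Qed.

Lemma evm_merge m1 m2 : evm (merge leq m1 m2) = evm m1 * evm m2.
Proof. by rewrite /evm (perm_big _ (permEl (perm_merge leq _ _))) big_cat. Qed.

Lemma evp_mterm t q : evp (pmterm t q) = evt t * evp q.
Proof.
rewrite /pmterm /evp big_map mulr_sumr; apply: eq_bigr => u _.
rewrite /evt /= evm_merge intrM.
by rewrite -!mulrA; congr (_ * _); rewrite mulrCA !mulrA.
Qed.

Lemma evp_mul0 p q : evp (pmul0 p q) = evp p * evp q.
Proof.
elim: p => [|t p IH]; first by rewrite /pmul0 /= evp_nil mul0r.
by rewrite /pmul0 /= evp_add evp_mterm -/(pmul0 p q) IH evp_cons mulrDl.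
Qed.

Lemma evp_mul p q : evp (pmul p q) = evp p * evp q.
Proof. by rewrite /pmul; case: ifP => _; rewrite evp_mul0 // mulrC. Qed.

Lemma evp_var i : evp (pvar i) = env i.
Proof. by rewrite /evp /pvar big_seq1 /evt /= /evm big_seq1 mul1r. Qed.
End Eval.

Definition cdg_add {A} (ad : A -> A -> A) (x y : A * A) := (ad x.1 y.1, ad x.2 y.2).
Definition cdg_opp {A} (op : A -> A) (x : A * A) := (op x.1, op x.2).
Definition cdg_mul {A} (ad : A -> A -> A) (op : A -> A) (mul : A -> A -> A) (cj : A -> A)
  (x y : A * A) :=
  (ad (mul x.1 y.1) (op (mul (cj y.2) x.2)), ad (mul y.2 x.1) (mul x.2 (cj y.1))).
Definition cdg_conj {A} (op : A -> A) (cj : A -> A) (x : A * A) := (cj x.1, op x.2).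

Definition cP := (rpoly * rpoly)%type.
Definition hP := (cP * cP)%type.
Definition oP := (hP * hP)%type.
Definition cadd := cdg_add padd. Definition copp := cdg_opp popp.
Definition cmul := cdg_mul padd popp pmul id. Definition cconj := cdg_conj popp id.
Definition hadd := cdg_add cadd. Definition hopp := cdg_opp copp.
Definition hmul := cdg_mul cadd copp cmul cconj. Definition hconj := cdg_conj copp cconj.
Definition oadd := cdg_add hadd. Definition oopp := cdg_opp hopp.
Definition omulP := cdg_mul hadd hopp hmul hconj. Definition oconj := cdg_conj hopp hconj.
Definition c0 : cP := ([::], [::]). Definition h0 : hP := (c0, c0). Definition o0 : oP := (h0, h0).

Definition smat := seq (seq oP).
Definition sget (A : smat) (i j : nat) : oP := nth o0 (nth [::] A i) j.
Definition smk (f : nat -> nat -> oP) : smat := [seq [seq f i j | j <- iota 0 3] | i <- iota 0 3].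
Definition smul (A B : smat) : smat :=
  smk (fun i j => oadd (omulP (sget A i 0) (sget B 0 j))
                   (oadd (omulP (sget A i 1) (sget B 1 j)) (omulP (sget A i 2) (sget B 2 j)))).
Definition sadd (A B : smat) : smat := smk (fun i j => oadd (sget A i j) (sget B i j)).
Definition sopp (A : smat) : smat := smk (fun i j => oopp (sget A i j)).
Definition sJ A B := sadd (smul A B) (smul B A).
Definition ovar (b o : nat) : oP := (((pvar (b+o), pvar (b+o.+1)), (pvar (b+o.+2), pvar (b+o.+3))), ((pvar (b+o.+3.+1), pvar (b+o.+3.+2)), (pvar (b+o.+3.+3), pvar (b+o.+3.+3.+1)))).
Definition odiag (b : nat) : oP := (((pvar b, [::]), c0), h0).
Definition gh (b : nat) : smat :=
  let a01 := ovar b 3 in let a02 := ovar b 11 in let a12 := ovar b 19 in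
  [:: [:: odiag (b + 0); a01; a02];
      [:: oconj a01; odiag (b + 1); a12];
      [:: oconj a02; oconj a12; odiag (b + 2)]].
Definition chk (A : smat) : bool :=
  all (fun i => all (fun j => sget A i j == o0) (iota 0 3)) (iota 0 3).
Definition jid :=
  let a := gh 0 in let x := gh 27 in
  let a2 := sJ a a in let ax := sJ a x in
  let t3 := sJ a (sJ a ax) in let u := sJ a2 ax in
  sadd (sadd (sJ (sJ a a2) x) (sadd t3 t3))
       (sopp (sadd u (sadd u u))).

Definition strace (A : smat) : rpoly :=
  padd (sget A 0 0).1.1.1 (padd (sget A 1 1).1.1.1 (sget A 2 2).1.1.1).
Definition tid :=
  let A := gh 0 in let B := gh 27 in let C := gh 54 in
  padd (strace (sJ (sJ A B) C)) (popp (strace (sJ A (sJ B C)))).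

Section CDM.
Variables (A : Type) (B : zmodType) (f : A -> B) (adA : A -> A -> A) (opA : A -> A)
  (mulA : A -> A -> A) (cjA : A -> A) (mulB : B -> B -> B) (cjB : B -> B).
Hypothesis fD : forall x y, f (adA x y) = f x + f y.
Hypothesis fN : forall x, f (opA x) = - f x.
Hypothesis fM : forall x y, f (mulA x y) = mulB (f x) (f y).
Hypothesis fC : forall x, f (cjA x) = cjB (f x).
Lemma cdm_add (x y : A * A) :
  (f (cdg_add adA x y).1, f (cdg_add adA x y).2) = (f x.1, f x.2) + (f y.1, f y.2).
Proof. by rewrite /= !fD. Qed.
Lemma cdm_opp (x : A * A) :
  (f (cdg_opp opA x).1, f (cdg_opp opA x).2) = - (f x.1, f x.2).
Proof. by rewrite /= !fN. Qed.
Lemma cdm_mul (x y : A * A) :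
  (f (cdg_mul adA opA mulA cjA x y).1, f (cdg_mul adA opA mulA cjA x y).2) =
  cd_mul mulB cjB (f x.1, f x.2) (f y.1, f y.2).
Proof. by rewrite /= !fD fN !fM !fC. Qed.
Lemma cdm_conj (x : A * A) :
  (f (cdg_conj opA cjA x).1, f (cdg_conj opA cjA x).2) = cd_conj cjB (f x.1, f x.2).
Proof. by rewrite /= fN fC. Qed.
End CDM.

Section Real.
Variable R : realType.
Variable env : nat -> R.
Definition evc (x : cP) : cpx R := (evp env x.1, evp env x.2).
Definition evh (x : hP) : quat R := (evc x.1, evc x.2).
Definition evo (x : oP) : oct R := (evh x.1, evh x.2).

Lemma evc_add x y : evc (cadd x y) = evc x + evc y.
Proof. exact: (cdm_add (evp_add env)). Qed.
Lemma evc_opp x : evc (copp x) = - evc x.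
Proof. exact: (cdm_opp (evp_opp env)). Qed.
Lemma evc_mul x y : evc (cmul x y) = mulC' (evc x) (evc y).
Proof. exact: (cdm_mul (evp_add env) (evp_opp env) (evp_mul env) (fun x => erefl)). Qed.
Lemma evc_conj x : evc (cconj x) = conjC' (evc x).
Proof. exact: (cdm_conj (f := evp env) (cjA := id) (cjB := fun r => r) (evp_opp env) (fun x => erefl)). Qed.
Lemma evh_add x y : evh (hadd x y) = evh x + evh y.
Proof. exact: (cdm_add evc_add). Qed.
Lemma evh_opp x : evh (hopp x) = - evh x.
Proof. exact: (cdm_opp evc_opp). Qed.
Lemma evh_mul x y : evh (hmul x y) = mulH (evh x) (evh y).
Proof. exact: (cdm_mul evc_add evc_opp evc_mul evc_conj). Qed.
Lemma evh_conj x : evh (hconj x) = conjH (evh x).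
Proof. exact: (cdm_conj evc_opp evc_conj). Qed.
Lemma evo_add x y : evo (oadd x y) = evo x + evo y.
Proof. exact: (cdm_add evh_add). Qed.
Lemma evo_opp x : evo (oopp x) = - evo x.
Proof. exact: (cdm_opp evh_opp). Qed.
Lemma evo_mul x y : evo (omulP x y) = mulO (evo x) (evo y).
Proof. exact: (cdm_mul evh_add evh_opp evh_mul evh_conj). Qed.
Lemma evo_conj x : evo (oconj x) = conjO (evo x).
Proof. exact: (cdm_conj evh_opp evh_conj). Qed.
Lemma evo0 : evo o0 = 0.
Proof. by rewrite /evo /evh /evc /= evp_nil. Qed.

Definition Rel (M : omat R) (A : smat) := forall i j : 'I_3, M i j = evo (sget A i j).

Lemma sget_smk f (i j : 'I_3) : sget (smk f) i j = f i j.
Proof. by case: i => [[|[|[|]]] Hi] //; case: j => [[|[|[|]]] Hj]. Qed.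

Lemma Rel_add M N A B : Rel M A -> Rel N B -> Rel (M + N) (sadd A B).
Proof. by move=> HM HN i j; rewrite /sadd sget_smk evo_add !mxE HM HN. Qed.
Lemma Rel_opp M A : Rel M A -> Rel (- M) (sopp A).
Proof. by move=> HM i j; rewrite /sopp sget_smk evo_opp !mxE HM. Qed.
Lemma Rel_mul M N A B : Rel M A -> Rel N B -> Rel (omul M N) (smul A B).
Proof.
move=> HM HN i j; rewrite /smul sget_smk !evo_add !evo_mul !mxE.
rewrite !big_ord_recl big_ord0 addr0 !HM !HN //.
Qed.
Lemma mem_iota_ord (i : 'I_3) : (i : nat) \in iota 0 3.
Proof. by rewrite mem_iota /= ltn_ord. Qed.

Lemma Rel_chk M A : Rel M A -> chk A -> M = 0.
Proof.
move=> HM /allP H; apply/matrixP => i j; rewrite HM mxE.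
have /allP := H i (mem_iota_ord i) => /(_ j (mem_iota_ord j)) /eqP ->.
exact: evo0.
Qed.
End Real.

Section Real2.
Variable R : realType.
Definition i0 : 'I_3 := @Ordinal 3 0 isT.
Definition i1 : 'I_3 := @Ordinal 3 1 isT.
Definition i2 : 'I_3 := @Ordinal 3 2 isT.
Lemma ord3_cases (i : 'I_3) : i = i0 \/ i = i1 \/ i = i2.
Proof.
case: i => [[|[|[|//]]] Hi]; [left|right;left|right;right]; exact: val_inj.
Qed.

Lemma oct_eta (x : oct R) : x = (((x.1.1.1, x.1.1.2), (x.1.2.1, x.1.2.2)), ((x.2.1.1, x.2.1.2), (x.2.2.1, x.2.2.2))).
Proof. by case: x => [[[? ?] [? ?]] [[? ?] [? ?]]]. Qed.

Lemma oct_ext (x y : oct R) :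
  x.1.1.1 = y.1.1.1 -> x.1.1.2 = y.1.1.2 -> x.1.2.1 = y.1.2.1 -> x.1.2.2 = y.1.2.2 ->
  x.2.1.1 = y.2.1.1 -> x.2.1.2 = y.2.1.2 -> x.2.2.1 = y.2.2.1 -> x.2.2.2 = y.2.2.2 -> x = y.
Proof. by rewrite [x]oct_eta [y]oct_eta /= => -> -> -> -> -> -> -> ->. Qed.

Definition ocoords (x : oct R) : seq R :=
  [:: x.1.1.1; x.1.1.2; x.1.2.1; x.1.2.2; x.2.1.1; x.2.1.2; x.2.2.1; x.2.2.2].
Definition hcoords (M : omat R) : seq R :=
  [:: reO (M i0 i0); reO (M i1 i1); reO (M i2 i2)] ++ ocoords (M i0 i1) ++ ocoords (M i0 i2)
   ++ ocoords (M i1 i2).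
Lemma size_hcoords M : size (hcoords M) = 27%N.
Proof. by []. Qed.

Lemma x_eq_negx (x : R) : x = - x -> x = 0.
Proof. move=> h; lra. Qed.

Lemma herm_diag (M : omat R) i : hermitian M ->
  M i i = (((reO (M i i), 0), (0, 0)), ((0, 0), (0, 0))).
Proof.
move=> /(_ i i) H; rewrite [LHS]oct_eta.
set x := M i i in H *.
rewrite /conjO /conjH /conjC' /cd_conj in H.
have h2 := congr1 (fun y => y.1.1.2) H; have h3 := congr1 (fun y => y.1.2.1) H;
have h4 := congr1 (fun y => y.1.2.2) H; have h5 := congr1 (fun y => y.2.1.1) H;
have h6 := congr1 (fun y => y.2.1.2) H; have h7 := congr1 (fun y => y.2.2.1) H;
have h8 := congr1 (fun y => y.2.2.2) H.
simpl in h2, h3, h4, h5, h6, h7, h8.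
rewrite (x_eq_negx h2) (x_eq_negx h3) (x_eq_negx h4).
rewrite -[x.2.1.1]opprK -h5 (x_eq_negx h5).
rewrite -[x.2.1.2]opprK -h6 (x_eq_negx h6).
rewrite -[x.2.2.1]opprK -h7 (x_eq_negx h7).
by rewrite -[x.2.2.2]opprK -h8 (x_eq_negx h8) oppr0.
Qed.

Lemma Rel_gh (env : nat -> R) M b : hermitian M ->
  (forall k, (k < 27)%N -> env (b + k)%N = nth 0 (hcoords M) k) -> Rel env M (gh b).
Proof.
move=> HM He i j.
case: (ord3_cases i) => [->|[->|->]]; case: (ord3_cases j) => [->|[->|->]]; rewrite /sget /=;
 first [ rewrite herm_diag //; rewrite /evo /evh /evc /= !evp_var !evp_nil He //
       | rewrite /evo /evh /evc /= !evp_var !He //=; exact: oct_eta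
       | rewrite [LHS]HM evo_conj; congr (conjO _);
         rewrite /evo /evh /evc /= !evp_var !He //=; exact: oct_eta ].
Qed.
End Real2.

Section Real3.
Variable R : realType.
Definition JJ (A B : omat R) : omat R := omul A B + omul B A.

Lemma Rel_J env M N A B : Rel env M A -> Rel env N B -> Rel env (JJ M N) (sJ A B).
Proof. by move=> HM HN; apply: Rel_add; apply: Rel_mul. Qed.

Ltac relt := first [ apply: Rel_J; relt | apply: Rel_add; relt | apply: Rel_opp; relt | assumption ].


Lemma nth_cat_off (l1 l2 : seq R) n k : size l1 = n ->
  nth 0 (l1 ++ l2) (n + k) = nth 0 l2 k.
Proof. by move=> <-; rewrite nth_cat ltnNge leq_addr /= addKn. Qed.

Lemma env_cat (l1 l2 : seq R) k : (k < size l2)%N ->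
  nth 0 (l1 ++ l2) (size l1 + k) = nth 0 l2 k.
Proof. by move=> _; rewrite nth_cat ltnNge leq_addr /= addKn. Qed.

Lemma jordan_id_J (a x : omat R) : hermitian a -> hermitian x ->
  let a2 := JJ a a in let ax := JJ a x in let t3 := JJ a (JJ a ax) in let u := JJ a2 ax in
  (JJ (JJ a a2) x + (t3 + t3)) + - (u + (u + u)) = 0.
Proof.
move=> Ha Hx /=.
pose env := fun v => nth 0 (hcoords a ++ hcoords x) v.
have Ra : Rel env a (gh 0).
  apply: Rel_gh => // k Hk; rewrite /env add0n nth_cat size_hcoords Hk //.
have Rx : Rel env x (gh 27).
  apply: Rel_gh => // k Hk; rewrite /env -(size_hcoords a) env_cat // size_hcoords.
apply: (@Rel_chk _ env _ jid); last by vm_compute.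
rewrite /jid; cbv zeta; relt.
Qed.

Lemma otr_Rel (env : nat -> R) M A : Rel env M A -> otr M = evp env (strace A).
Proof.
move=> HM; rewrite /otr /strace !evp_add !big_ord_recl big_ord0 addr0 !HM /reO //.
Qed.

Lemma trace_assoc_J (a b c : omat R) : hermitian a -> hermitian b -> hermitian c ->
  otr (JJ (JJ a b) c) = otr (JJ a (JJ b c)).
Proof.
move=> Ha Hb Hc.
pose env := fun v => nth 0 (hcoords a ++ hcoords b ++ hcoords c) v.
have Ra : Rel env a (gh 0).
  by apply: Rel_gh => // k Hk; rewrite /env add0n nth_cat size_hcoords Hk.
have Rb : Rel env b (gh 27).
  apply: Rel_gh => // k Hk; rewrite /env nth_cat_off ?size_hcoords //.
  by rewrite nth_cat size_hcoords Hk.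
have Rc : Rel env c (gh 54).
  by apply: Rel_gh => // k Hk; rewrite /env catA nth_cat_off.
rewrite (@otr_Rel env _ (sJ (sJ (gh 0) (gh 27)) (gh 54))); last by relt.
rewrite (@otr_Rel env _ (sJ (gh 0) (sJ (gh 27) (gh 54)))); last by relt.
apply/eqP; rewrite -subr_eq0 -evp_opp -evp_add.
have -> : padd (strace (sJ (sJ (gh 0) (gh 27)) (gh 54))) (popp (strace (sJ (gh 0) (sJ (gh 27) (gh 54))))) = [::].
  by apply/eqP; vm_compute.
by rewrite evp_nil.
Qed.
End Real3.

Section Real4.
Variable R : realType.
Implicit Types (x y z : oct R) (A B C M N : omat R).

Ltac octsplit := apply: oct_ext; rewrite /=.
Ltac octring := octsplit; rewrite /GRing.scale /=; ring.

Lemma mulODl x y z : mulO (x + y) z = mulO x z + mulO y z.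
Proof. octring. Qed.
Lemma mulODr x y z : mulO x (y + z) = mulO x y + mulO x z.
Proof. octring. Qed.
Lemma mulONl x y : mulO (- x) y = - mulO x y.
Proof. octring. Qed.
Lemma mulONr x y : mulO x (- y) = - mulO x y.
Proof. octring. Qed.
Lemma mulOZl (r : R) x y : mulO (r *: x) y = r *: mulO x y.
Proof. octring. Qed.
Lemma mulOZr (r : R) x y : mulO x (r *: y) = r *: mulO x y.
Proof. octring. Qed.
Lemma mulO0l x : mulO 0 x = 0.
Proof. octring. Qed.
Lemma mulO0r x : mulO x 0 = 0.
Proof. octring. Qed.
Lemma mulO1r x : mulO x (oneO R) = x.
Proof. octring. Qed.
Lemma mulO1l x : mulO (oneO R) x = x.
Proof. octring. Qed.
Lemma conjO_mul x y : conjO (mulO x y) = mulO (conjO y) (conjO x).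
Proof. octring. Qed.
Lemma conjOD x y : conjO (x + y) = conjO x + conjO y.
Proof. octring. Qed.
Lemma conjON x : conjO (- x) = - conjO x.
Proof. octring. Qed.
Lemma conjOZ (r : R) x : conjO (r *: x) = r *: conjO x.
Proof. octring. Qed.
Lemma conjO0 : conjO (0 : oct R) = 0.
Proof. octring. Qed.
Lemma conjO_one : conjO (oneO R) = oneO R.
Proof. octring. Qed.

Definition nsq x := x.1.1.1 ^+ 2 + x.1.1.2 ^+ 2 + x.1.2.1 ^+ 2 + x.1.2.2 ^+ 2 +
  x.2.1.1 ^+ 2 + x.2.1.2 ^+ 2 + x.2.2.1 ^+ 2 + x.2.2.2 ^+ 2.
Lemma reO_norm x : reO (mulO x (conjO x)) = nsq x.
Proof. rewrite /reO /nsq /=; ring. Qed.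
Lemma nsq_ge0 x : 0 <= nsq x.
Proof. rewrite /nsq; nra. Qed.
Lemma nsq_eq0 x : nsq x = 0 -> x = 0.
Proof.
rewrite /nsq => h; octsplit; nra.
Qed.

Definition mc M i j (k : nat) : R := nth 0 (ocoords (M i j)) k.
Lemma omat_ext M N : (forall i j k, (k < 8)%N -> mc M i j k = mc N i j k) -> M = N.
Proof.
move=> h; apply/matrixP => i j; apply: oct_ext;
 [exact: (h i j 0%N) | exact: (h i j 1%N) | exact: (h i j 2%N) | exact: (h i j 3%N)
 | exact: (h i j 4%N) | exact: (h i j 5%N) | exact: (h i j 6%N) | exact: (h i j 7%N)].
Qed.
Lemma mcD M N i j k : mc (M + N) i j k = mc M i j k + mc N i j k.
Proof. by rewrite /mc !mxE; do 8?[case: k => [|k]] => //=; rewrite nth_nil addr0. Qed.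
Lemma mcN M i j k : mc (- M) i j k = - mc M i j k.
Proof. by rewrite /mc !mxE; do 8?[case: k => [|k]] => //=; rewrite nth_nil oppr0. Qed.
Lemma mcZ r M i j k : mc (oscale r M) i j k = r * mc M i j k.
Proof. by rewrite /mc !mxE; do 8?[case: k => [|k]] => //=; rewrite nth_nil mulr0. Qed.
Lemma mc0 i j k : mc (0 : omat R) i j k = 0.
Proof. by rewrite /mc !mxE; do 8?[case: k => [|k]] => //=; rewrite nth_nil. Qed.
Definition mcE := (mcD, mcN, mcZ, mc0).

Lemma omulDl A B C : omul (A + B) C = omul A C + omul B C.
Proof.
apply/matrixP => i j; rewrite !mxE -big_split /=; apply: eq_bigr => k _.
by rewrite !mxE mulODl.
Qed.
Lemma omulDr A B C : omul A (B + C) = omul A B + omul A C.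
Proof.
apply/matrixP => i j; rewrite !mxE -big_split /=; apply: eq_bigr => k _.
by rewrite !mxE mulODr.
Qed.
Lemma omulNl A B : omul (- A) B = - omul A B.
Proof.
apply/matrixP => i j; rewrite !mxE -sumrN; apply: eq_bigr => k _.
by rewrite !mxE mulONl.
Qed.
Lemma omulNr A B : omul A (- B) = - omul A B.
Proof.
apply/matrixP => i j; rewrite !mxE -sumrN; apply: eq_bigr => k _.
by rewrite !mxE mulONr.
Qed.
Lemma omulZl r A B : omul (oscale r A) B = oscale r (omul A B).
Proof.
apply/matrixP => i j; rewrite !mxE scaler_sumr; apply: eq_bigr => k _.
by rewrite !mxE mulOZl.
Qed.
Lemma omulZr r A B : omul A (oscale r B) = oscale r (omul A B).
Proof.
apply/matrixP => i j; rewrite !mxE scaler_sumr; apply: eq_bigr => k _.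
by rewrite !mxE mulOZr.
Qed.
Lemma omul0l A : omul 0 A = 0.
Proof. by apply/matrixP => i j; rewrite !mxE big1 // => k _; rewrite mxE mulO0l. Qed.
Lemma omul0r A : omul A 0 = 0.
Proof. by apply/matrixP => i j; rewrite !mxE big1 // => k _; rewrite mxE mulO0r. Qed.

Lemma oscaleD r A B : oscale r (A + B) = oscale r A + oscale r B.
Proof. by apply/matrixP => i j; rewrite !mxE scalerDr. Qed.
Lemma oscaleN r A : oscale r (- A) = - oscale r A.
Proof. by apply/matrixP => i j; rewrite !mxE scalerN. Qed.
Lemma oscaleA r s A : oscale r (oscale s A) = oscale (r * s) A.
Proof. by apply/matrixP => i j; rewrite !mxE scalerA. Qed.
Lemma oscale1 A : oscale 1 A = A.
Proof. by apply/matrixP => i j; rewrite !mxE scale1r. Qed.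
Lemma oscale0 A : oscale 0 A = 0.
Proof. by apply/matrixP => i j; rewrite !mxE scale0r. Qed.
Lemma oscale_0 r : oscale r (0 : omat R) = 0.
Proof. by apply/matrixP => i j; rewrite !mxE scaler0. Qed.

Lemma jordanE A B : jordan A B = oscale 2^-1 (JJ A B).
Proof. by []. Qed.
Lemma JJ_jordan A B : JJ A B = oscale 2 (jordan A B).
Proof. by rewrite jordanE oscaleA divff ?oscale1 // pnatr_eq0. Qed.
Lemma jordanC A B : jordan A B = jordan B A.
Proof. by rewrite !jordanE /JJ addrC. Qed.
Lemma jordanDl A B C : jordan (A + B) C = jordan A C + jordan B C.
Proof. by rewrite !jordanE /JJ omulDl omulDr -oscaleD addrACA. Qed.
Lemma jordanDr A B C : jordan A (B + C) = jordan A B + jordan A C.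
Proof. by rewrite !jordanE /JJ omulDl omulDr -oscaleD addrACA. Qed.
Lemma jordanNr A B : jordan A (- B) = - jordan A B.
Proof. by rewrite !jordanE /JJ omulNl omulNr -opprD oscaleN. Qed.
Lemma jordanNl A B : jordan (- A) B = - jordan A B.
Proof. by rewrite jordanC jordanNr jordanC. Qed.
Lemma jordanZr r A B : jordan A (oscale r B) = oscale r (jordan A B).
Proof. by rewrite !jordanE /JJ omulZl omulZr -oscaleD !oscaleA mulrC. Qed.
Lemma jordanZl r A B : jordan (oscale r A) B = oscale r (jordan A B).
Proof. by rewrite jordanC jordanZr jordanC. Qed.
Lemma jordan0r A : jordan A 0 = 0.
Proof. by rewrite jordanE /JJ omul0l omul0r addr0 oscale_0. Qed.
Lemma jordanBr A B C : jordan A (B - C) = jordan A B - jordan A C.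
Proof. by rewrite jordanDr jordanNr. Qed.

Lemma otrD A B : otr (A + B) = otr A + otr B.
Proof. by rewrite /otr -big_split; apply: eq_bigr => i _; rewrite mxE. Qed.
Lemma otrZ r A : otr (oscale r A) = r * otr A.
Proof. by rewrite /otr mulr_sumr; apply: eq_bigr => i _; rewrite mxE. Qed.
Lemma otrN A : otr (- A) = - otr A.
Proof. by rewrite /otr -sumrN; apply: eq_bigr => i _; rewrite mxE. Qed.

Lemma hermD A B : hermitian A -> hermitian B -> hermitian (A + B).
Proof. by move=> hA hB i j; rewrite !mxE hA hB conjOD. Qed.
Lemma hermN A : hermitian A -> hermitian (- A).
Proof. by move=> hA i j; rewrite !mxE hA conjON. Qed.
Lemma hermZ r A : hermitian A -> hermitian (oscale r A).
Proof. by move=> hA i j; rewrite !mxE hA conjOZ. Qed.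
Lemma herm0 : hermitian (0 : omat R).
Proof. by move=> i j; rewrite !mxE conjO0. Qed.


Lemma addmx_entry M N i j : (M + N) i j = M i j + N i j.
Proof. by rewrite mxE. Qed.

Lemma omul_herm A B : hermitian A -> hermitian B ->
  forall i j, (omul A B) j i = conjO ((omul B A) i j).
Proof.
move=> hA hB i j; rewrite !mxE !big_ord_recl !big_ord0 !addr0 !conjOD !conjO_mul.
by rewrite -!hA -!hB.
Qed.
Lemma hermJ A B : hermitian A -> hermitian B -> hermitian (jordan A B).
Proof.
move=> hA hB; rewrite jordanE; apply: hermZ => i j.
rewrite /JJ !addmx_entry.
by rewrite (omul_herm hA hB i j) (omul_herm hB hA i j) conjOD addrC.
Qed.
End Real4.

Lemma JJE (R : realType) (A B : omat R) : JJ A B = omul A B + omul B A.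
Proof. by []. Qed.
Section Real5.
Variable R : realType.
Implicit Types (x y z : oct R) (A B C D M N W X e : omat R).
Ltac mxlin := apply: omat_ext => i j k _; rewrite !mcE.

Lemma reOD x y : reO (x + y) = reO x + reO y.
Proof. by []. Qed.
Lemma reO0 : reO (0 : oct R) = 0.
Proof. by []. Qed.

Lemma otr_self D : hermitian D -> otr (omul D D) = \sum_(i < 3) \sum_(k < 3) nsq (D i k).
Proof.
move=> hD; rewrite /otr; apply: eq_bigr => i _; rewrite mxE.
rewrite (big_morph _ reOD reO0); apply: eq_bigr => k _.
by rewrite (hD i k) reO_norm.
Qed.

Lemma herm_pos D : hermitian D -> otr (omul D D) = 0 -> D = 0.
Proof.
move=> hD; rewrite otr_self // => H.
have H1 := psumr_eq0P (P := predT) (fun i _ => sumr_ge0 _ (fun k _ => nsq_ge0 (D i k))) H.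
apply/matrixP => i k; rewrite mxE.
have H2 := psumr_eq0P (P := predT) (fun k _ => nsq_ge0 (D i k)) (H1 i isT).
exact: nsq_eq0 (H2 k isT).
Qed.

Definition Yf e X : omat R :=
  X + oscale (- 4%:R) (jordan e X) + oscale 4%:R (jordan e (jordan e X)).

Lemma jordan_Id3 M : jordan M (Id3 R) = M.
Proof.
have h1 : omul M (Id3 R) = M.
  apply/matrixP => i j; rewrite mxE !big_ord_recl big_ord0 addr0 !mxE.
  by case: (ord3_cases j) => [->|[->|->]]; rewrite /= ?mulO1r ?mulO0r ?addr0 ?add0r; congr (M _ _); apply: val_inj.
have h2 : omul (Id3 R) M = M.
  apply/matrixP => i j; rewrite mxE !big_ord_recl big_ord0 addr0 !mxE.
  by case: (ord3_cases i) => [->|[->|->]]; rewrite /= ?mulO1l ?mulO0l ?addr0 ?add0r; congr (M _ _); apply: val_inj.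
rewrite jordanE JJE h1 h2; mxlin; lra.
Qed.

End Real5.

Section Abs.
Variables (R : realType) (T : zmodType) (I : Type).
Variables (sc : R -> T -> T) (jo JJa : T -> T -> T) (tr : T -> R) (herm : T -> Prop) (Id : T)
  (comp : T -> I -> R).
Hypothesis ext : forall A B, (forall c, comp A c = comp B c) -> A = B.
Hypothesis cD : forall A B c, comp (A + B) c = comp A c + comp B c.
Hypothesis cN : forall A c, comp (- A) c = - comp A c.
Hypothesis cZ : forall r A c, comp (sc r A) c = r * comp A c.
Hypothesis c0 : forall c, comp 0 c = 0.
Hypothesis joDr : forall A B C, jo A (B + C) = jo A B + jo A C.
Hypothesis joNr : forall A B, jo A (- B) = - jo A B.
Hypothesis joZr : forall r A B, jo A (sc r B) = sc r (jo A B).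
Hypothesis joC : forall A B, jo A B = jo B A.
Hypothesis JJ_jo : forall A B, JJa A B = sc 2 (jo A B).
Hypothesis hD : forall A B, herm A -> herm B -> herm (A + B).
Hypothesis hN : forall A, herm A -> herm (- A).
Hypothesis hZ : forall r A, herm A -> herm (sc r A).
Hypothesis hJ : forall A B, herm A -> herm B -> herm (jo A B).
Hypothesis trD : forall A B, tr (A + B) = tr A + tr B.
Hypothesis trN : forall A, tr (- A) = - tr A.
Hypothesis trZ : forall r A, tr (sc r A) = r * tr A.
Hypothesis tr_assocJ : forall A B C, herm A -> herm B -> herm C ->
  tr (JJa (JJa A B) C) = tr (JJa A (JJa B C)).
Hypothesis pos : forall D, herm D -> tr (jo D D) = 0 -> D = 0.
Hypothesis jidJ : forall a x, herm a -> herm x ->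
  let a2 := JJa a a in let ax := JJa a x in let t3 := JJa a (JJa a ax) in let u := JJa a2 ax in
  (JJa (JJa a a2) x + (t3 + t3)) + - (u + (u + u)) = 0.
Hypothesis joId : forall M, jo M Id = M.

Ltac lin := apply: ext => c; rewrite ?(cD, cN, cZ, c0).

Lemma scD r A B : sc r (A + B) = sc r A + sc r B.
Proof. by lin; lra. Qed.
Lemma scN r A : sc r (- A) = - sc r A.
Proof. by lin; lra. Qed.
Lemma scA r s A : sc r (sc s A) = sc (r * s) A.
Proof. by lin; lra. Qed.
Lemma sc1 A : sc 1 A = A.
Proof. by lin; lra. Qed.
Lemma sc0 A : sc 0 A = 0.
Proof. by lin; lra. Qed.
Lemma joDl A B C : jo (A + B) C = jo A C + jo B C.
Proof. by rewrite joC joDr joC [jo C B]joC. Qed.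
Lemma joNl A B : jo (- A) B = - jo A B.
Proof. by rewrite joC joNr joC. Qed.
Lemma joZl r A B : jo (sc r A) B = sc r (jo A B).
Proof. by rewrite joC joZr joC. Qed.
Lemma joBr A B C : jo A (B - C) = jo A B - jo A C.
Proof. by rewrite joDr joNr. Qed.
Lemma hB A B : herm A -> herm B -> herm (A - B).
Proof. by move=> hA hB'; apply: hD => //; apply: hN. Qed.

Lemma tr_jassoc A B C : herm A -> herm B -> herm C ->
  tr (jo (jo A B) C) = tr (jo A (jo B C)).
Proof.
move=> hA hB' hC.
have := tr_assocJ hA hB' hC.
rewrite !JJ_jo !joZl !joZr !trZ => h.
have h2 : (2 : R) * 2 != 0 by rewrite mulf_neq0 // pnatr_eq0.
by apply: (mulfI h2); rewrite -!mulrA.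
Qed.

Lemma tr_selfadj e A B : herm e -> herm A -> herm B ->
  tr (jo (jo e A) B) = tr (jo A (jo e B)).
Proof. by move=> he hA hB'; rewrite [jo e A]joC tr_jassoc. Qed.

Lemma peirce e X : herm e -> herm X -> jo e e = e ->
  sc 2 (jo e (jo e (jo e X))) = sc 3 (jo e (jo e X)) - jo e X.
Proof.
move=> he hX ee.
have := jidJ he hX; rewrite /=.
rewrite !JJ_jo ?(joZl, joZr, scA, ee).
move=> H; lin.
have := congr1 (fun M => comp M c) H; rewrite /= ?(cD, cN, cZ, c0).
lra.
Qed.

Definition eigspa e (l : R) X := herm X /\ jo e X = sc l X.
Definition oinnera A B := 2^-1 * tr (jo A B).
Definition VPa e X := (exists X0 X1, eigspa e 0 X0 /\ eigspa e 1 X1 /\ X = X0 + X1)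
  /\ oinnera X Id = 0.
Definition OP2a e := herm e /\ jo e e = e /\ tr e = 1.
Definition h30a X := herm X /\ tr X = 0.
Definition oproja (V : T -> Prop) X : T :=
  epsilon (inhabits (0 : T)) (fun Y => V Y /\ forall W, V W -> oinnera (X - Y) W = 0).
Definition Yfa e X := X + sc (- 4%:R) (jo e X) + sc 4%:R (jo e (jo e X)).

Lemma oinner_self D : herm D -> oinnera D D = 0 -> D = 0.
Proof. by move=> hD' h; apply: pos => //; move: h; rewrite /oinnera => h; lra. Qed.

Lemma VP_herm e W : VPa e W -> herm W.
Proof. by move=> [[W0 [W1 [[h0 _] [[h1 _] ->]]]] _]; apply: hD. Qed.

Lemma VP_sub e A B : VPa e A -> VPa e B -> VPa e (A - B).
Proof.
move=> [[A0 [A1 [[hA0 eA0] [[hA1 eA1] ->]]]] iA] [[B0 [B1 [[hB0 eB0] [[hB1 eB1] ->]]]] iB].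
split.
  exists (A0 - B0), (A1 - B1); split; last split.
  - split; first exact: hB.
    by rewrite joBr eA0 eB0 scD scN.
  - split; first exact: hB.
    by rewrite joBr eA1 eB1 scD scN.
  - by rewrite opprD addrACA.
move: iA iB; rewrite /oinnera => h1 h2.
by rewrite joDl joNl trD trN mulrDr mulrN h1 h2 subrr.
Qed.

Lemma VP_Y e X : OP2a e -> h30a X -> VPa e (Yfa e X).
Proof.
move=> [he [ee te]] [hX tX].
have P := peirce he hX ee.
have hl : herm (jo e X) by apply: hJ.
have hll : herm (jo e (jo e X)) by apply: hJ.
split.
  exists (sc 2 (jo e (jo e X)) - sc 3 (jo e X) + X).
  exists (sc 2 (jo e (jo e X)) - jo e X).
  split; last split.
  - split; first by apply: hD => //; apply: hB; apply: hZ.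
    rewrite !joDr !joNr !joZr sc0.
    lin; have := congr1 (fun M => comp M c) P; rewrite /= ?(cD, cN, cZ, c0); lra.
  - split; first by apply: hB => //; apply: hZ.
    rewrite !joDr !joNr !joZr sc1.
    lin; have := congr1 (fun M => comp M c) P; rewrite /= ?(cD, cN, cZ, c0); lra.
  - by rewrite /Yfa; lin; lra.
rewrite /oinnera joId /Yfa !trD !trZ.
have -> : tr (jo e (jo e X)) = tr (jo e X) by rewrite -tr_jassoc // ee.
rewrite tX; lra.
Qed.

Lemma perp_Y e X : OP2a e -> h30a X ->
  forall W, VPa e W -> oinnera (X - Yfa e X) W = 0.
Proof.
move=> [he [ee te]] [hX tX] W VW.
have hW := VP_herm VW.
case: VW => [[W0 [W1 [[h0 e0] [[h1 e1] EW]]]] _].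
have lW : jo e W = W1 by rewrite EW joDr e0 e1 sc0 sc1 add0r.
have lW1 : jo e W1 = W1 by rewrite e1 sc1.
have -> : X - Yfa e X = sc 4%:R (jo e X) - sc 4%:R (jo e (jo e X)).
  by rewrite /Yfa; lin; lra.
have hlX : herm (jo e X) by apply: hJ.
rewrite /oinnera joDl joNl !joZl trD trN !trZ.
have hlW : herm (jo e W) by apply: hJ.
rewrite !tr_selfadj // lW lW1.
lra.
Qed.

Lemma oinnerB A B W : oinnera (A - B) W = oinnera A W - oinnera B W.
Proof. by rewrite /oinnera joDl joNl trD trN mulrBr. Qed.

Lemma oproj_Ya e X : OP2a e -> h30a X -> oproja (VPa e) X = Yfa e X.
Proof.
move=> he hX; rewrite /oproja.
set P := fun Y => VPa e Y /\ (forall W, VPa e W -> oinnera (X - Y) W = 0).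
have exP : exists Y, P Y by exists (Yfa e X); split; [exact: VP_Y | exact: perp_Y].
have [V1 O1] := epsilon_spec (inhabits 0) P exP.
move: V1 O1; set Y1 := epsilon _ P => V1 O1.
have V0 := VP_Y he hX; have O0 := perp_Y he hX.
have VD := VP_sub V1 V0.
have E : Y1 - Yfa e X = (X - Yfa e X) - (X - Y1) by lin; lra.
have : oinnera (Y1 - Yfa e X) (Y1 - Yfa e X) = 0.
  by rewrite {1}E oinnerB O0 // O1 // subrr.
by move=> /(oinner_self (VP_herm VD)) /eqP; rewrite subr_eq0 => /eqP.
Qed.
End Abs.

Section Inst.
Variable R : realType.
Implicit Types (A B C D M X e : omat R).

Definition compc M (c : 'I_3 * 'I_3 * 'I_8) : R := mc M c.1.1 c.1.2 c.2.

Lemma ext_c A B : (forall c, compc A c = compc B c) -> A = B.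
Proof. move=> h; apply: omat_ext => i j k hk; exact: (h (i, j, Ordinal hk)). Qed.

Lemma pos_c D : hermitian D -> otr (jordan D D) = 0 -> D = 0.
Proof.
move=> hD; rewrite jordanE otrZ JJE otrD => h; apply: herm_pos => //.
move: h; set t := otr _ => h; lra.
Qed.

Lemma oproj_Y e X : OP2 e -> h30 X ->
  oproj (VP e) X = X + oscale (- 4%:R) (jordan e X) + oscale 4%:R (jordan e (jordan e X)).
Proof.
move=> he hX.
exact: (@oproj_Ya R (omat R) _ (@oscale R) (@jordan R) (@JJ R) (@otr R) (@hermitian R) (Id3 R)
  compc ext_c (fun A B c => mcD A B _ _ _) (fun A c => mcN A _ _ _) (fun r A c => mcZ r A _ _ _)
  (fun c => mc0 _ _ _ _) (@jordanDr R) (@jordanNr R) (@jordanZr R) (@jordanC R) (@JJ_jordan R)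
  (@hermD R) (@hermN R) (@hermZ R) (@hermJ R) (@otrD R) (@otrN R) (@otrZ R)
  (@trace_assoc_J R) (@pos_c) (@jordan_id_J R) (@jordan_Id3 R) e X he hX).
Qed.
End Inst.

Section Der.
Local Open Scope classical_set_scope.
Variable R : realType.

Lemma is_deriveP (U : normedModType R) (f : R -> U) (x v : R) (d : U) :
  (fun h => h^-1 *: ((f \o shift x) (h *: v) - f x)) @ 0^' --> d -> is_derive x v f d.
Proof.
move=> H; apply: DeriveDef; first by apply/cvg_ex; exists d.
exact: cvg_lim H.
Qed.

Lemma is_derive_cvg (U : normedModType R) (f : R -> U) (x v : R) (d : U) :
  is_derive x v f d -> (fun h => h^-1 *: ((f \o shift x) (h *: v) - f x)) @ 0^' --> d.
Proof. by move=> [H E]; rewrite -E; exact: H. Qed.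

Lemma is_derive_pair (U V : normedModType R) (f : R -> U) (g : R -> V) (x v : R) df dg :
  is_derive x v f df -> is_derive x v g dg -> is_derive x v (fun t => (f t, g t)) (df, dg).
Proof.
move=> /is_derive_cvg Hf /is_derive_cvg Hg; apply: is_deriveP.
exact: (cvg_pair Hf Hg).
Qed.

Lemma is_derive_fst (U V : normedModType R) (F : R -> U * V) (x v : R) d :
  is_derive x v F d -> is_derive x v (fun t => (F t).1) d.1.
Proof.
move=> /is_derive_cvg H; apply: is_deriveP.
exact: (cvg_comp _ _ H cvg_fst).
Qed.

Lemma is_derive_snd (U V : normedModType R) (F : R -> U * V) (x v : R) d :
  is_derive x v F d -> is_derive x v (fun t => (F t).2) d.2.
Proof.
move=> /is_derive_cvg H; apply: is_deriveP.
exact: (cvg_comp _ _ H cvg_snd).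
Qed.
End Der.

Section Der2.
Local Open Scope classical_set_scope.
Variable R : realType.
Section G.
Variable U : normedModType R.
Implicit Types (f g : R -> U) (x v : R).
Lemma dval f x v d d' : is_derive x v f d -> d = d' -> is_derive x v f d'.
Proof. by move=> H <-. Qed.
Lemma dD f g x v df dg : is_derive x v f df -> is_derive x v g dg ->
  is_derive x v (fun t => f t + g t) (df + dg).
Proof. exact: is_deriveD. Qed.
Lemma dN f x v df : is_derive x v f df -> is_derive x v (fun t => - f t) (- df).
Proof. exact: is_deriveN. Qed.
Lemma dB f g x v df dg : is_derive x v f df -> is_derive x v g dg ->
  is_derive x v (fun t => f t - g t) (df - dg).
Proof. by move=> H1 H2; apply: dD => //; apply: dN. Qed.
Lemma dZ f (k : R) x v df : is_derive x v f df -> is_derive x v (fun t => k *: f t) (k *: df).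
Proof. exact: is_deriveZ. Qed.
Lemma dcst (c : U) x v : is_derive x v (fun _ => c) 0.
Proof. exact: is_derive_cst. Qed.
End G.
Lemma dM (f g : R -> R) x v df dg : is_derive x v f df -> is_derive x v g dg ->
  is_derive x v (fun t => f t * g t) (f x * dg + df * g x).
Proof.
move=> H1 H2.
have -> : f x * dg + df * g x = f x *: dg + g x *: df.
  by rewrite /GRing.scale /= [df * _]mulrC.
exact: is_deriveM H1 H2.
Qed.

Lemma zm1 (V : zmodType) (a b c d : V) : a + b - (c + d) = (a - d) + (b - c).
Proof. by rewrite opprD [- c + _]addrC addrACA. Qed.
Lemma zm2 (V : zmodType) (p q r s : V) : (p + q) + (r + s) = (q + r) + (p + s).
Proof. by rewrite [p + q]addrC addrACA. Qed.

Section CDD.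
Variable A : normedModType R.
Variables (mul : A -> A -> A) (cj : A -> A).
Hypothesis mulD : forall (f g : R -> A) df dg, is_derive (0:R) (1:R) f df -> is_derive (0:R) (1:R) g dg ->
  is_derive (0:R) (1:R) (fun t => mul (f t) (g t)) (mul (f 0) dg + mul df (g 0)).
Hypothesis cjD : forall (f : R -> A) df, is_derive (0:R) (1:R) f df ->
  is_derive (0:R) (1:R) (fun t => cj (f t)) (cj df).
Lemma cd_mulD (F G : R -> A * A) dF dG : is_derive (0:R) (1:R) F dF -> is_derive (0:R) (1:R) G dG ->
  is_derive (0:R) (1:R) (fun t => cd_mul mul cj (F t) (G t))
    (cd_mul mul cj (F 0) dG + cd_mul mul cj dF (G 0)).
Proof.
move=> HF HG.
have F1 := is_derive_fst HF; have F2 := is_derive_snd HF.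
have G1 := is_derive_fst HG; have G2 := is_derive_snd HG.
apply: dval.
  rewrite /cd_mul; apply: is_derive_pair.
rewrite /cd_mul /=; congr (_, _); [exact: zm1 | exact: zm2].
Qed.
Lemma cd_conjD (F : R -> A * A) dF : is_derive (0:R) (1:R) F dF ->
  is_derive (0:R) (1:R) (fun t => cd_conj cj (F t)) (cd_conj cj dF).
Proof.
move=> HF; apply: is_derive_pair; first exact: cjD (is_derive_fst HF).
exact: dN (is_derive_snd HF).
Qed.
End CDD.

Lemma mulRD (f g : R -> R) df dg : is_derive (0:R) (1:R) f df -> is_derive (0:R) (1:R) g dg ->
  is_derive (0:R) (1:R) (fun t => f t * g t) (f 0 * dg + df * g 0).
Proof. exact: dM. Qed.

Lemma mulCD (f g : R -> cpx R) df dg : is_derive (0:R) (1:R) f df -> is_derive (0:R) (1:R) g dg ->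
  is_derive (0:R) (1:R) (fun t => mulC' (f t) (g t)) (mulC' (f 0) dg + mulC' df (g 0)).
Proof. exact: (cd_mulD mulRD (cj := fun r => r)). Qed.
Lemma conjCD (f : R -> cpx R) df : is_derive (0:R) (1:R) f df ->
  is_derive (0:R) (1:R) (fun t => conjC' (f t)) (conjC' df).
Proof. exact: (cd_conjD (cj := fun r : R => r)). Qed.
Lemma mulHD (f g : R -> quat R) df dg : is_derive (0:R) (1:R) f df -> is_derive (0:R) (1:R) g dg ->
  is_derive (0:R) (1:R) (fun t => mulH (f t) (g t)) (mulH (f 0) dg + mulH df (g 0)).
Proof. exact: (cd_mulD mulCD conjCD). Qed.
Lemma conjHD (f : R -> quat R) df : is_derive (0:R) (1:R) f df ->
  is_derive (0:R) (1:R) (fun t => conjH (f t)) (conjH df).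
Proof. exact: (cd_conjD conjCD). Qed.
Lemma mulOD (f g : R -> oct R) df dg : is_derive (0:R) (1:R) f df -> is_derive (0:R) (1:R) g dg ->
  is_derive (0:R) (1:R) (fun t => mulO (f t) (g t)) (mulO (f 0) dg + mulO df (g 0)).
Proof. exact: (cd_mulD mulHD conjHD). Qed.
End Der2.

Section Der3.
Variable R : realType.
Implicit Types (f g : R -> omat R) (A B C D M U V X Z P : omat R).

Lemma cd_ext f g D : (forall t, f t = g t) -> curve_deriv0 f D -> curve_deriv0 g D.
Proof. by move=> E; have -> : g = f by apply: funext => t; rewrite E. Qed.
Lemma cd_val f D D' : curve_deriv0 f D -> D = D' -> curve_deriv0 f D'.
Proof. by move=> H <-. Qed.
Lemma cd_const M : curve_deriv0 (fun _ => M) 0.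
Proof. by move=> i j; rewrite mxE; exact: dcst. Qed.
Lemma cd_add f g Df Dg : curve_deriv0 f Df -> curve_deriv0 g Dg ->
  curve_deriv0 (fun t => f t + g t) (Df + Dg).
Proof.
move=> Hf Hg i j; rewrite mxE.
have -> : (fun t => (f t + g t) i j) = (fun t => f t i j + g t i j).
  by apply: funext => t; rewrite mxE.
exact: dD.
Qed.
Lemma cd_addc M f Df : curve_deriv0 f Df -> curve_deriv0 (fun t => M + f t) Df.
Proof.
move=> Hf; apply: cd_val; first exact: cd_add (cd_const M) Hf.
by rewrite add0r.
Qed.
Lemma cd_scale (r : R) f Df : curve_deriv0 f Df ->
  curve_deriv0 (fun t => oscale r (f t)) (oscale r Df).
Proof.
move=> Hf i j; rewrite mxE.
have -> : (fun t => (oscale r (f t)) i j) = (fun t => r *: f t i j).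
  by apply: funext => t; rewrite mxE.
exact: dZ.
Qed.

Lemma sum3 (W : zmodType) (F : 'I_3 -> W) :
  \sum_(k < 3) F k = F ord0 + (F (lift ord0 ord0) + F (lift ord0 (lift ord0 ord0))).
Proof. by rewrite !big_ord_recl big_ord0 addr0. Qed.

Lemma zm3 (W : zmodType) (a0 b0 a1 b1 a2 b2 : W) :
  (a0 + b0) + ((a1 + b1) + (a2 + b2)) = (a0 + (a1 + a2)) + (b0 + (b1 + b2)).
Proof. by rewrite (addrACA a1 b1 a2 b2) (addrACA a0 b0). Qed.

Lemma cd_omul f g Df Dg : curve_deriv0 f Df -> curve_deriv0 g Dg ->
  curve_deriv0 (fun t => omul (f t) (g t)) (omul (f 0) Dg + omul Df (g 0)).
Proof.
move=> Hf Hg i j.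
set k0 : 'I_3 := ord0; set k1 : 'I_3 := lift ord0 ord0; set k2 : 'I_3 := lift ord0 (lift ord0 ord0).
have -> : (fun t => (omul (f t) (g t)) i j) =
  (fun t => mulO (f t i k0) (g t k0 j) + (mulO (f t i k1) (g t k1 j) + mulO (f t i k2) (g t k2 j))).
  by apply: funext => t; rewrite mxE sum3.
apply: dval; first by apply: dD; [|apply: dD]; apply: mulOD.
by rewrite !mxE !sum3 zm3.
Qed.

Lemma zm5 (W : zmodType) (a b c d : W) : (a + b) + (c + d) = (a + d) + (b + c).
Proof. by rewrite [c + d]addrC addrACA. Qed.

Lemma jordan_split A B C D :
  oscale 2^-1 ((omul A B + omul C D) + (omul D C + omul B A)) = jordan A B + jordan C D.
Proof. by rewrite (jordanE A B) (jordanE C D) -oscaleD (zm5 (omul A B)). Qed.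

Lemma cd_jordan f g Df Dg : curve_deriv0 f Df -> curve_deriv0 g Dg ->
  curve_deriv0 (fun t => jordan (f t) (g t)) (jordan (f 0) Dg + jordan Df (g 0)).
Proof.
move=> Hf Hg.
have H := cd_scale 2^-1 (cd_add (cd_omul Hf Hg) (cd_omul Hg Hf)).
apply: (cd_val H).
exact: jordan_split.
Qed.

Lemma zm4 (W : zmodType) (a b c : W) : a + (b + c) = a + c + b.
Proof. by rewrite -addrA [b + c]addrC. Qed.

Lemma final_eq P Z U V :
  oscale (- 4%:R) (jordan P 0 + U) + oscale 4%:R (jordan P (jordan P 0 + U) + jordan Z V)
  = oscale (- 4%:R) U + oscale 4%:R (jordan Z V) + oscale 4%:R (jordan P U).
Proof. rewrite (jordan0r P) (add0r U) (oscaleD _ (jordan P U)); exact: zm4. Qed.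
End Der3.

Theorem proposition2p2 (R : realType) (P Z X : omat R) (gamma : R -> omat R) :
  OP2 P -> tangentOP2 P Z -> h30 X ->
  (forall t, OP2 (gamma t)) -> gamma 0 = P -> curve_deriv0 gamma Z ->
  curve_deriv0 (fun t => oproj (@VP R (gamma t)) X)
    (oscale (- 4%:R) (jordan Z X) + oscale 4%:R (jordan Z (jordan P X))
       + oscale 4%:R (jordan P (jordan Z X))).
Proof.
move=> hP _ hX hg g0 dg.
apply: (cd_ext (f := fun t => X + oscale (- 4%:R) (jordan (gamma t) X)
                     + oscale 4%:R (jordan (gamma t) (jordan (gamma t) X)))).
  by move=> t; rewrite (oproj_Y (hg t) hX).
have H1 := cd_jordan dg (cd_const X).
have H2 := cd_jordan dg H1.
have H3 := cd_add (cd_addc X (cd_scale (- 4%:R) H1)) (cd_scale 4%:R H2).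
apply: (cd_val H3).
rewrite g0 /=.
exact: final_eq.
Qed.
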